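(* Let $P(z)=z^3+az^2+bz+c$ be a cubic polynomial with complex coefficients such that $0<1-|c|^2\le|a\bar c-\bar b|$. Then $P$ has a root $r$ with $|r|\ge1$. *)

(* Defs.v *)
From mathcomp Require Import all_boot all_order all_algebra.
From mathcomp Require Import complex.
From mathcomp Require Import reals.

(* Main.v *)
Require Import Defs.
From mathcomp Require Import all_boot all_order all_algebra.
From mathcomp Require Import complex reals ring.
Import Order.TTheory GRing.Theory Num.Theory.
Local Open Scope ring_scope.

Lemma cubic_coef (K : nzRingType) (a b c a' b' c' : K) :
  'X^3 + a%:P*'X^2 + b%:P*'X + c%:P = 'X^3 + a'%:P*'X^2 + b'%:P*'X + c'%:P ->
  [/\ a = a', b = b' & c = c'].
Proof.
move=> E; split;
 [move: (congr1 (fun p : {poly K} => p`_2) E) | move: (congr1 (fun p : {poly K} => p`_1) E)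
 | move: (congr1 (fun p : {poly K} => p`_0) E)];
rewrite !coefD !coefCM !coefXn !coefX !coefC /= !(mulr1, mulr0, addr0, add0r) //.
Qed.

Lemma key (C : numClosedFieldType) (s r : C) :
  1 <= `|s| -> `|r| < 1 -> `|1 - r^* * s| <= `|s - r|.
Proof.
move=> hs hr.
rewrite -(ler_pXn2r (n := 2)) // ?nnegrE ?normr_ge0 //.
rewrite -subr_ge0.
have -> : `|s - r| ^+ 2 - `|1 - r^* * s| ^+ 2 = (`|s|^+2 - 1) * (1 - `|r|^+2).
  rewrite !normCK !rmorphB !rmorphM rmorph1 /= conjCK; ring.
apply: mulr_ge0; rewrite subr_ge0.
  exact: exprn_ege1.
by apply: ltW; rewrite exprn_ilt1.
Qed.

Lemma prod3 (K : comNzRingType) (r1 r2 r3 : K) :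
  ('X - r1%:P) * (('X - r2%:P) * (('X - r3%:P) * 1)) =
  'X^3 + (-(r1+r2+r3))%:P*'X^2 + (r1*r2+r1*r3+r2*r3)%:P*'X + (-(r1*r2*r3))%:P.
Proof. rewrite !(rmorphN, rmorphD, rmorphM); ring. Qed.

Lemma nle1 (C : numDomainType) (x : C) : ~~ (1 <= `|x|) -> `|x| < 1.
Proof. by move=> h; rewrite real_ltNge ?normr_real ?real1. Qed.

Lemma step (C : numClosedFieldType) (r1 r2 r3 s c : C) :
  `|r1| < 1 -> `|r2| < 1 -> `|r3| < 1 -> 1 <= `|s| -> `|c| < 1 ->
  (s - r1) * (s - r2) * (s - r3) =
    c * ((1 - r1^* * s) * (1 - r2^* * s) * (1 - r3^* * s)) ->
  (s - r1) * (s - r2) * (s - r3) = 0.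
Proof.
move=> h1 h2 h3 hs hc E.
set Pst := (1 - r1^* * s) * _ * _ in E.
have Hle : `|Pst| <= `|(s - r1) * (s - r2) * (s - r3)|.
  rewrite /Pst !normrM.
  by do 2?[apply: ler_pM; rewrite ?normr_ge0 ?mulr_ge0 ?normr_ge0 //]; apply: key.
have [P0|Pn0] := eqVneq Pst 0; first by rewrite E P0 mulr0.
exfalso.
have : `|c| * `|Pst| < `|Pst| by rewrite gtr_pMl // normr_gt0.
by rewrite -normrM -E => /lt_le_trans/(_ Hle); rewrite ltxx.
Qed.
Local Open Scope complex_scope.

Theorem lemma5p5 (R : realType) (a b c : R[i]) :
  0 < 1 - `|c| ^+ 2 -> 1 - `|c| ^+ 2 <= `|a * c^* - b^*| ->
  exists r : R[i], root ('X^3 + a%:P * 'X^2 + b%:P * 'X + c%:P) r /\ 1 <= `|r|.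
Proof.
change (0 < 1 - `|c| ^+ 2 -> 1 - `|c| ^+ 2 <= `|a * Num.conj c - Num.conj b| ->
  exists r : R[i], root ('X^3 + a%:P * 'X^2 + b%:P * 'X + c%:P) r /\ 1 <= `|r|).
move=> hA hle.
have hc1 : `|c| < 1.
  apply: nle1; apply/negP => h; move: (exprn_ege1 2 h).
  by rewrite -subr_le0 => /(lt_le_trans hA); rewrite ltxx.
set P := 'X^3 + _ + _ + _.
have PE : P = (('X + a%:P) * 'X + b%:P) * 'X + c%:P by rewrite /P; ring.
have sP : size P = 4.
  rewrite PE !size_MXaddC size_XaddC.
  by rewrite -!size_poly_eq0 ?size_XaddC ?size_MXaddC ?size_XaddC //= -size_poly_eq0 size_XaddC.
have lP : lead_coef P = 1.
  by rewrite lead_coefE sP /P !coefD !coefCM !coefXn !coefX !coefC /= !(mulr1, mulr0, addr0, add0r).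
have [rs Dp] := closed_field_poly_normal P.
have hsz : size rs = 3.
  suff : (size rs).+1 = 4 by case.
  by rewrite -sP [in RHS]Dp lP scale1r size_prod_XsubC.
case: rs Dp hsz => [|r1 [|r2 [|r3 [|? ?]]]] //= Dp _.
rewrite lP scale1r !big_cons big_nil prod3 /P in Dp.
have [ea eb ec] := @cubic_coef _ _ _ _ _ _ _ Dp.
have hPx : forall x, P.[x] = (x - r1) * (x - r2) * (x - r3).
  by move=> x; rewrite /P !(hornerD, hornerM, hornerXn, hornerC, hornerX) ea eb ec; ring.
have [h1|/nle1 h1] := boolP (1 <= `|r1|).
  by exists r1; split=> //; rewrite /root hPx subrr !(mulr0, mul0r).
have [h2|/nle1 h2] := boolP (1 <= `|r2|).
  by exists r2; split=> //; rewrite /root hPx subrr !(mulr0, mul0r).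
have [h3|/nle1 h3] := boolP (1 <= `|r3|).
  by exists r3; split=> //; rewrite /root hPx subrr !(mulr0, mul0r).
set A := 1 - `|c| ^+ 2.
set B := a - c * Num.conj b.
set Cc := b - c * Num.conj a.
set Q := (A%:P * 'X + B%:P) * 'X + Cc%:P.
have hA0 : A != 0 by rewrite gt_eqF.
have s1 : size (A%:P * 'X + B%:P) = 2.
  by rewrite size_MXaddC polyC_eq0 (negbTE hA0) /= size_polyC hA0.
have sQ : size Q = 3 by rewrite size_MXaddC -size_poly_eq0 s1.
have lQ : lead_coef Q = A.
  by rewrite lead_coefE sQ /Q !coefE /= !(mulr1, mulr0, addr0, add0r).
have [rs Dq] := closed_field_poly_normal Q.
have hsz : size rs = 2.
  suff : (size rs).+1 = 3 by case.
  by rewrite -sQ [in RHS]Dq size_scale ?lQ // size_prod_XsubC.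
case: rs Dq hsz => [|s1' [|s2' [|? ?]]] //= Dq _.
rewrite lQ !big_cons big_nil in Dq.
have hQx : forall x, (A * x + B) * x + Cc = A * ((x - s1') * ((x - s2') * 1)).
  move=> x; have := congr1 (fun p : {poly _} => p.[x]) Dq.
  by rewrite /Q /= !(hornerD, hornerM, hornerX, hornerC, hornerZ, hornerN, hornerXsubC, hornerE).
have hs : forall s, (A * s + B) * s + Cc = 0 -> 1 <= `|s| -> root P s.
  move=> s hq hs; rewrite /root hPx; apply/eqP; apply: (@step R[i] r1 r2 r3 s c h1 h2 h3 hs hc1).
  apply/eqP; rewrite -subr_eq0; apply/eqP.
  transitivity (s * ((A * s + B) * s + Cc)); last by rewrite hq mulr0.
  rewrite /A /B /Cc normCK ea eb ec.
  rewrite !(rmorphN, rmorphD, rmorphM) /=.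
  ring.
have [k1|/nle1 k1] := boolP (1 <= `|s1'|).
  by exists s1'; split=> //; apply: hs=> //; rewrite hQx subrr !(mulr0, mul0r).
have [k2|/nle1 k2] := boolP (1 <= `|s2'|).
  by exists s2'; split=> //; apply: hs=> //; rewrite hQx subrr !(mulr0, mul0r, mulr1).
exfalso.
have hC : Cc = A * (s1' * s2').
  by move: (hQx 0); rewrite !(mulr0, add0r, sub0r, mulr1, mulrNN).
have hlt : `|Cc| < A.
  rewrite hC normrM (ger0_norm (ltW hA)) gtr_pMr // normrM.
  by apply: mulr_ilt1; rewrite ?normr_ge0.
have hE : `|a * Num.conj c - Num.conj b| = `|Cc|.
  rewrite -norm_conjC -normrN /Cc !(rmorphB, rmorphM) /= !conjCK.
  congr (`|_|); ring.
move: hle; rewrite hE => /(lt_le_trans hlt); by rewrite ltxx.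
Qed.
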